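(* (1) If a nonzero element of $T_n\cap\mathbb{Q}[\boldsymbol{\theta}_n]$ is antisymmetric, then it has degree exactly $n-1$. (2) If a nonzero element of $T_n\cap\mathbb{Q}[\boldsymbol{\theta}_n,\boldsymbol{\xi}_n]$ is antisymmetric, then it has degree exactly $n-1$.
   Context: Let $\mathbb{Q}[\boldsymbol{\theta}_n,\boldsymbol{\xi}_n,\boldsymbol{\rho}_n]$ be the $\mathbb{Q}$-algebra generated by $3n$ pairwise anticommuting variables $\theta_i,\xi_i,\rho_i$ ($1\le i\le n$), with $\mathfrak{S}_n$ acting by permuting indices simultaneously in all three sets; $\mathbb{Q}[\boldsymbol{\theta}_n]$ and $\mathbb{Q}[\boldsymbol{\theta}_n,\boldsymbol{\xi}_n]$ are the subalgebras generated by the $\theta$'s, resp. the $\theta$'s and $\xi$'s. An element $p$ is antisymmetric if $\sigma(p)=\mathrm{sgn}(\sigma)p$ for all $\sigma\in\mathfrak{S}_n$. Derivatives: for a variable $\alpha_j$, $\partial_{\alpha_j}(\alpha_{i_1}\cdots\alpha_{i_k})=(-1)^{\ell-1}\alpha_{i_1}\cdots\widehat{\alpha_{i_\ell}}\cdots\alpha_{i_k}$ if $\alpha_j$ is the $\ell$-th factor and $0$ otherwise. $T_n:=\{f:\sum_{i=1}^n\partial_{\theta_i}^h\partial_{\xi_i}^k\partial_{\rho_i}^\ell f=0\ \forall h,k,\ell\ge0,\ h+k+\ell>0\}$. Degree means total degree in the variables. *)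

(* Defs.v *)
From HB Require Import structures.
From mathcomp Require Import all_boot all_order all_algebra all_fingroup.
Set Implicit Arguments. Unset Strict Implicit. Unset Printing Implicit Defensive.
Import GRing.Theory.
Local Open Scope ring_scope.

(* The 3n anticommuting variables: (k, i) with k = 0 (theta_i), 1 (xi_i),
   2 (rho_i). *)
Definition var (n : nat) := ('I_3 * 'I_n)%type.
Definition code (n : nat) (u : var n) : nat := (u.1 * n + u.2)%N.

Definition th (n : nat) (i : 'I_n) : var n := (@Ordinal 3 0 isT, i).
Definition xi (n : nat) (i : 'I_n) : var n := (@Ordinal 3 1 isT, i).
Definition rh (n : nat) (i : 'I_n) : var n := (@Ordinal 3 2 isT, i).

(* An element of Q[theta_n, xi_n, rho_n] is given by its coordinates in the
   basis of monomials: for a set S of variables, f S is the coefficient of the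
   product of the variables of S taken in increasing order. *)
Notation elt n := {ffun {set var n} -> rat}.

(* Derivative d_v: d_v(a_{i1}...a_{ik}) = (-1)^(l-1) (monomial without a_v)
   if a_v is the l-th factor.  Coefficient of monomial T (v notin T) in d_v f
   is (-1)^#{u in T | u < v} * f (T + v). *)
Definition deriv (n : nat) (v : var n) (f : elt n) : elt n :=
  [ffun T : {set var n} =>
     if v \in T then 0
     else (-1) ^+ #|[set u in T | (code u < code v)%N]| * f (v |: T)].

Definition inT (n : nat) (f : elt n) : Prop :=
  forall h k l : nat, (0 < h + k + l)%N ->
    \sum_(i < n) iter h (deriv (th i)) (iter k (deriv (xi i)) (iter l (deriv (rh i)) f)) = 0.

Definition permvar (n : nat) (s : 'S_n) (u : var n) : var n := (u.1, s u.2).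

(* number of inversions of sigma on the (increasingly ordered) monomial S:
   sigma(a_{u1} ... a_{uk}) = (-1)^inv * (sorted monomial on sigma(S)). *)
Definition inv_count (n : nat) (s : 'S_n) (S : {set var n}) : nat :=
  #|[set p : var n * var n | [&& p.1 \in S, p.2 \in S, (code p.1 < code p.2)%N
                                & (code (permvar s p.2) < code (permvar s p.1))%N]]|.

Definition act (n : nat) (s : 'S_n) (f : elt n) : elt n :=
  [ffun T : {set var n} =>
     (-1) ^+ inv_count s (permvar s^-1 @: T) * f (permvar s^-1 @: T)].

Definition antisym_elt (n : nat) (f : elt n) : Prop :=
  forall s : 'S_n, forall T, act s f T = (-1) ^+ odd_perm s * f T.

Definition in_Qth (n : nat) (f : elt n) : Prop :=
  forall S : {set var n}, f S != 0 -> forall u, u \in S -> val u.1 = 0%N.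

Definition in_Qthxi (n : nat) (f : elt n) : Prop :=
  forall S : {set var n}, f S != 0 -> forall u, u \in S -> (val u.1 < 2)%N.

Definition degree (n : nat) (f : elt n) : nat :=
  \max_(S : {set var n} | f S != 0) #|S|.

(* Main.v *)
Require Import Defs.
From HB Require Import structures.
From mathcomp Require Import all_boot all_order all_algebra all_fingroup.
From mathcomp Require Import ring lra zify.
Set Implicit Arguments. Unset Strict Implicit. Unset Printing Implicit Defensive.
Import GRing.Theory Num.Theory.
Local Open Scope ring_scope.

Section Work.
Variable n : nat.
Implicit Types (f g h : elt n) (T : {set var n}) (v w : var n) (i j : 'I_n).

Definition sg T (v : var n) : rat := (-1) ^+ #|[set u in T | (code u < code v)%N]|.
Definition mulv (v : var n) (g : elt n) : elt n :=
  [ffun T : {set var n} => if v \in T then sg T v * g (T :\ v) else 0].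

Lemma derivE v g T : Defs.deriv v g T = if v \in T then 0 else sg T v * g (v |: T).
Proof. by rewrite ffunE. Qed.

Lemma mulvE v g T : mulv v g T = if v \in T then sg T v * g (T :\ v) else 0.
Proof. by rewrite ffunE. Qed.

Lemma code_inj : injective (@code n).
Proof.
move=> [a i] [b j]; rewrite /code /= => h.
have n0 : (0 < n)%N by apply: leq_ltn_trans (ltn_ord i).
have ij : i = j :> nat.
  by have := congr1 (modn^~ n) h; rewrite /= !modnMDl !modn_small.
have ab : a = b :> nat.
  have := congr1 (divn^~ n) h; rewrite /= !divnMDl // !divn_small ?addn0 //.
by congr pair; apply: val_inj.
Qed.

Lemma cnt_U1 x T (P : pred (var n)) : x \notin T ->
  #|[set u in x |: T | P u]| = (P x + #|[set u in T | P u]|)%N.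
Proof.
move=> xT; case Px: (P x).
  rewrite (_ : [set u in x |: T | P u] = x |: [set u in T | P u]).
    by rewrite cardsU1 inE (negbTE xT).
  by apply/setP=> u; rewrite !inE; case: eqP => // ->; rewrite Px.
rewrite (_ : [set u in x |: T | P u] = [set u in T | P u]) //.
apply/setP=> u; rewrite !inE; case: eqP => // ->.
by rewrite Px (negbTE xT).
Qed.

Lemma sgU1 x T v : x \notin T -> sg (x |: T) v = (-1) ^+ (code x < code v)%N * sg T v.
Proof. by move=> xT; rewrite /sg cnt_U1 // exprD. Qed.

Lemma sg_sq T v : sg T v * sg T v = 1.
Proof. by rewrite /sg -exprD -signr_odd oddD addbb. Qed.

Lemma sgD1 T v w : w \in T -> sg T v = (-1) ^+ (code w < code v)%N * sg (T :\ w) v.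
Proof. by move=> wT; rewrite -{1}(setD1K wT) sgU1 // setD11. Qed.

Lemma deriv_mulv v w g :
  Defs.deriv v (mulv w g) = (if v == w then g else 0) - mulv w (Defs.deriv v g).
Proof.
apply/ffunP=> T; rewrite derivE [RHS]ffunE [X in _ + X]ffunE [in RHS]mulvE.
have [<-|vw] := eqVneq v w.
  case vT: (v \in T).
    rewrite derivE !inE eqxx /= setD1K // (sgD1 v vT) ltnn expr0 mul1r.
    by rewrite mulrA sg_sq mul1r subrr.
  rewrite mulvE setU11 setU1K ?vT // subr0 sgU1 ?vT // ltnn expr0 mul1r.
  by rewrite mulrA sg_sq mul1r.
rewrite ffunE (_ : (0 : elt n) T = 0) ?ffunE // sub0r.
case vT: (v \in T).
  by case: ifP => // wT; rewrite !inE vw vT /= mulr0 oppr0.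
rewrite !inE vT andbF /= eq_sym (negbTE vw) /=.
case wT: (w \in T); last by rewrite mulr0 oppr0.
rewrite -/(sg (T :\ w) v).
have X : (v |: T) :\ w = v |: (T :\ w).
  apply/setP=> u; rewrite !inE; case: (eqVneq u v) => [->|] //=; by rewrite (negbTE vw).
rewrite X sgU1 ?vT // (sgD1 v wT).
have cv : code v != code w by apply: contra vw => /eqP /code_inj ->.
have [lt|gt|eq] := ltngtP (code v) (code w); last by rewrite eq eqxx in cv.
- by rewrite expr0 expr1; ring.
- by rewrite expr0 expr1; ring.
Qed.



Lemma ffD g h T : (g + h) T = g T + h T. Proof. by rewrite ffunE. Qed.
Lemma ffN g T : (- g) T = - g T. Proof. by rewrite ffunE. Qed.
Lemma ffB g h T : (g - h) T = g T - h T. Proof. by rewrite !ffunE. Qed.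
Lemma ff0 T : (0 : elt n) T = 0. Proof. by rewrite ffunE. Qed.
Lemma ffMn g m T : (g *+ m) T = g T *+ m.
Proof. by elim: m => [|m IH]; rewrite ?mulr0n ?ff0 // !mulrS ffD IH. Qed.
Definition ffE := (ffD, ffN, ff0, ffMn, sum_ffunE).

Lemma deriv_zm v : zmod_morphism (Defs.deriv v).
Proof.
move=> g h; apply/ffunP=> T; rewrite ffB !derivE ffB.
by case: ifP => _; [rewrite subr0 | rewrite mulrBr].
Qed.
HB.instance Definition _ v := GRing.isZmodMorphism.Build (elt n) (elt n) (Defs.deriv v) (deriv_zm v).

Lemma mulv_zm v : zmod_morphism (mulv v).
Proof.
move=> g h; apply/ffunP=> T; rewrite ffB !mulvE ffB.
by case: ifP => _; [rewrite mulrBr | rewrite subr0].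
Qed.
HB.instance Definition _ v := GRing.isZmodMorphism.Build (elt n) (elt n) (mulv v) (mulv_zm v).

Definition sc (a : rat) g : elt n := [ffun T => a * g T].
Lemma sc_zm a : zmod_morphism (sc a).
Proof. by move=> g h; apply/ffunP=> T; rewrite !ffunE mulrBr. Qed.
HB.instance Definition _ a := GRing.isZmodMorphism.Build (elt n) (elt n) (sc a) (sc_zm a).

Lemma deriv_sc v a g : Defs.deriv v (sc a g) = sc a (Defs.deriv v g).
Proof. apply/ffunP=> T; rewrite !ffunE; case: ifP => _; [by rewrite mulr0 | by rewrite mulrCA]. Qed.
Lemma mulv_sc v a g : mulv v (sc a g) = sc a (mulv v g).
Proof. apply/ffunP=> T; rewrite !ffunE; case: ifP => _; [by rewrite mulrCA | by rewrite mulr0]. Qed.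

Lemma th_eq i j : (th i == th j) = (i == j).
Proof. by rewrite /th xpair_eqE eqxx. Qed.
Lemma xi_eq i j : (xi i == xi j) = (i == j).
Proof. by rewrite /xi xpair_eqE eqxx. Qed.
Lemma thxi i j : (th i == xi j) = false.
Proof. by rewrite /th /xi xpair_eqE. Qed.
Lemma xith i j : (xi i == th j) = false.
Proof. by rewrite /th /xi xpair_eqE. Qed.

Lemma sum_if (F : 'I_n -> elt n) i : \sum_(j < n) (if j == i then F j else 0) = F i.
Proof. by rewrite -big_mkcond big_pred1_eq. Qed.

Lemma J1 i j g : Defs.deriv (th j) (mulv (xi i) (mulv (th i) g)) =
  mulv (xi i) (mulv (th i) (Defs.deriv (th j) g)) - (if j == i then mulv (xi i) g else 0).
Proof.
rewrite deriv_mulv thxi sub0r deriv_mulv th_eq raddfB opprB.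
by case: (j == i); rewrite ?raddf0 ?subr0 ?sub0r ?addr0 ?add0r ?opprK // addrC.
Qed.

Lemma J2 i j k g : Defs.deriv (th j) (mulv (th i) (mulv (xi k) g)) =
  (if j == i then mulv (xi k) g else 0) + mulv (th i) (mulv (xi k) (Defs.deriv (th j) g)).
Proof.
by rewrite deriv_mulv th_eq deriv_mulv thxi sub0r raddfN opprK.
Qed.

Lemma J3 i j g : Defs.deriv (xi j) (mulv (xi i) (mulv (th i) g)) =
  (if j == i then mulv (th i) g else 0) + mulv (xi i) (mulv (th i) (Defs.deriv (xi j) g)).
Proof.
by rewrite deriv_mulv xi_eq deriv_mulv xith sub0r raddfN opprK.
Qed.

Lemma J4 i j k g : Defs.deriv (xi j) (mulv (th i) (mulv (xi k) g)) =
  mulv (th i) (mulv (xi k) (Defs.deriv (xi j) g)) - (if j == k then mulv (th i) g else 0).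
Proof.
rewrite deriv_mulv xith sub0r deriv_mulv xi_eq raddfB opprB.
by case: (j == k); rewrite ?raddf0 ?subr0 ?sub0r ?addr0 ?add0r ?opprK // addrC.
Qed.


Lemma J5 i j g : Defs.deriv (th j) (Defs.deriv (xi j) (mulv (xi i) (mulv (th i) g))) =
  (if j == i then g - mulv (th j) (Defs.deriv (th j) g) - mulv (xi j) (Defs.deriv (xi j) g) else 0)
  + mulv (xi i) (mulv (th i) (Defs.deriv (th j) (Defs.deriv (xi j) g))).
Proof.
rewrite J3 raddfD /= J1; case: eqP => [->|_]; last by rewrite raddf0 subr0 !add0r.
rewrite deriv_mulv th_eq eqxx.
by apply/ffunP=> T; rewrite !ffE; ring.
Qed.

Lemma J6 i j k g : Defs.deriv (th j) (Defs.deriv (xi j) (mulv (th i) (mulv (xi k) g))) =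
  - (if j == i then if j == k then g else 0 else 0)
  + (if j == k then mulv (th i) (Defs.deriv (th j) g) else 0)
  + (if j == i then mulv (xi k) (Defs.deriv (xi j) g) else 0)
  + mulv (th i) (mulv (xi k) (Defs.deriv (th j) (Defs.deriv (xi j) g))).
Proof.
rewrite J4 raddfB /= J2.
case: (j == k); rewrite ?raddf0 ?deriv_mulv ?th_eq; case: (j == i);
  by apply/ffunP=> T; rewrite !ffE; ring.
Qed.


Definition D1 g := \sum_(j < n) Defs.deriv (th j) g.
Definition D2 g := \sum_(j < n) Defs.deriv (xi j) g.
Definition D3 g := \sum_(j < n) Defs.deriv (th j) (Defs.deriv (xi j) g).
Definition P g := \sum_(i < n) mulv (th i) g.
Definition Q g := \sum_(i < n) mulv (xi i) g.
Definition L g := \sum_(i < n) mulv (xi i) (mulv (th i) g).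
Definition Nop g := \sum_(j < n) (mulv (th j) (Defs.deriv (th j) g) + mulv (xi j) (Defs.deriv (xi j) g)).

Lemma sum_if' (F : 'I_n -> elt n) i : \sum_(j < n) (if i == j then F j else 0) = F i.
Proof. by rewrite -(sum_if F i); apply: eq_bigr => j _; rewrite eq_sym. Qed.

Lemma S1 g : D1 (L g) = L (D1 g) - Q g.
Proof.
rewrite /D1 /L /Q.
transitivity (\sum_(j < n) \sum_(i < n) (mulv (xi i) (mulv (th i) (Defs.deriv (th j) g))
   - (if j == i then mulv (xi i) g else 0))).
  by apply: eq_bigr => j _; rewrite raddf_sum; apply: eq_bigr => i _; rewrite /= J1.
rewrite exchange_big /= -sumrB; apply: eq_bigr => i _.
by rewrite sumrB sum_if !raddf_sum.
Qed.


Lemma sum_const_n (x : elt n) : \sum_(j < n) x = x *+ n.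
Proof. by rewrite sumr_const card_ord. Qed.

Lemma sum3_rot (F : 'I_n -> 'I_n -> 'I_n -> elt n) :
  \sum_(j < n) \sum_(i < n) \sum_(k < n) F j i k = \sum_(i < n) \sum_(k < n) \sum_(j < n) F j i k.
Proof. by rewrite exchange_big; apply: eq_bigr => i _; rewrite exchange_big. Qed.

Lemma sum3_split (F G : 'I_n -> 'I_n -> 'I_n -> elt n) :
  \sum_(j < n) \sum_(i < n) \sum_(k < n) (F j i k + G j i k) =
  \sum_(j < n) \sum_(i < n) \sum_(k < n) F j i k + \sum_(j < n) \sum_(i < n) \sum_(k < n) G j i k.
Proof.
rewrite -big_split; apply: eq_bigr => j _; rewrite -big_split; apply: eq_bigr => i _.
by rewrite -big_split.
Qed.

Lemma sum2_split (F G : 'I_n -> 'I_n -> elt n) :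
  \sum_(j < n) \sum_(i < n) (F j i + G j i) =
  \sum_(j < n) \sum_(i < n) F j i + \sum_(j < n) \sum_(i < n) G j i.
Proof. by rewrite -big_split; apply: eq_bigr => j _; rewrite -big_split. Qed.

Lemma S2 g : D1 (P (Q g)) = Q g *+ n + P (Q (D1 g)).
Proof.
rewrite /D1 /P /Q.
transitivity (\sum_(j < n) \sum_(i < n) \sum_(k < n) ((if j == i then mulv (xi k) g else 0)
   + mulv (th i) (mulv (xi k) (Defs.deriv (th j) g)))).
  apply: eq_bigr => j _; rewrite raddf_sum; apply: eq_bigr => i _.
  by rewrite /= !raddf_sum; apply: eq_bigr => k _; rewrite /= J2.
apply: etrans (sum3_split _ _) _; congr (_ + _).
  rewrite sum3_rot -sum_const_n; apply: eq_bigr => i _.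
  by apply: eq_bigr => k _; rewrite sum_if.
rewrite sum3_rot.
by apply: eq_bigr => i _; rewrite raddf_sum; apply: eq_bigr => k _; rewrite /= !raddf_sum.
Qed.

Lemma S3 g : D2 (L g) = L (D2 g) + P g.
Proof.
rewrite /D2 /L /P.
transitivity (\sum_(j < n) \sum_(i < n) ((if j == i then mulv (th i) g else 0) +
   mulv (xi i) (mulv (th i) (Defs.deriv (xi j) g)))).
  by apply: eq_bigr => j _; rewrite raddf_sum; apply: eq_bigr => i _; rewrite /= J3.
apply: etrans (sum2_split _ _) _; rewrite addrC; congr (_ + _).
  by rewrite exchange_big; apply: eq_bigr => i _; rewrite !raddf_sum.
by rewrite exchange_big; apply: eq_bigr => i _; apply: sum_if.
Qed.

Lemma S4 g : D2 (P (Q g)) = P (Q (D2 g)) - P g *+ n.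
Proof.
rewrite /D2 /P /Q.
transitivity (\sum_(j < n) \sum_(i < n) \sum_(k < n) (mulv (th i) (mulv (xi k) (Defs.deriv (xi j) g))
   + - (if j == k then mulv (th i) g else 0))).
  apply: eq_bigr => j _; rewrite raddf_sum; apply: eq_bigr => i _.
  by rewrite /= !raddf_sum; apply: eq_bigr => k _; rewrite /= J4.
apply: etrans (sum3_split _ _) _; rewrite sum3_rot; congr (_ + _).
  by apply: eq_bigr => i _; rewrite raddf_sum; apply: eq_bigr => k _; rewrite /= !raddf_sum.
rewrite -sum_const_n -sumrN; apply: eq_bigr => j _.
rewrite -sumrN; apply: eq_bigr => i _.
by rewrite sumrN sum_if'.
Qed.


Lemma S5 g : D3 (L g) = g *+ n - Nop g + L (D3 g).
Proof.
rewrite /D3 /L /Nop.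
transitivity (\sum_(j < n) \sum_(i < n) ((if j == i then
   g - mulv (th j) (Defs.deriv (th j) g) - mulv (xi j) (Defs.deriv (xi j) g) else 0)
  + mulv (xi i) (mulv (th i) (Defs.deriv (th j) (Defs.deriv (xi j) g))))).
  apply: eq_bigr => j _; rewrite !raddf_sum; apply: eq_bigr => i _.
  by rewrite /= J5.
apply: etrans (sum2_split _ _) _; congr (_ + _).
  rewrite -sum_const_n -sumrB; apply: eq_bigr => j _.
  by rewrite sum_if' opprD addrA.
by rewrite exchange_big; apply: eq_bigr => i _; rewrite !raddf_sum.
Qed.

Lemma S6 g : D3 (P (Q g)) = - g *+ n + P (D1 g) + Q (D2 g) + P (Q (D3 g)).
Proof.
rewrite /D3 /P /Q /D1 /D2.
transitivity (\sum_(j < n) \sum_(i < n) \sum_(k < n) (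
  - (if j == i then if j == k then g else 0 else 0)
  + (if j == k then mulv (th i) (Defs.deriv (th j) g) else 0)
  + (if j == i then mulv (xi k) (Defs.deriv (xi j) g) else 0)
  + mulv (th i) (mulv (xi k) (Defs.deriv (th j) (Defs.deriv (xi j) g))))).
  apply: eq_bigr => j _; rewrite !raddf_sum; apply: eq_bigr => i _.
  by rewrite /= !raddf_sum; apply: eq_bigr => k _; rewrite /= J6.
apply: etrans (sum3_split _ _) _; congr (_ + _).
apply: etrans (sum3_split _ _) _; congr (_ + _).
apply: etrans (sum3_split _ _) _; congr (_ + _).
- rewrite -sum_const_n; apply: eq_bigr => j _.
  rewrite (eq_bigr (fun i => - (if j == i then g else 0))); last first.
    by move=> i _; rewrite sumrN; case: (j == i); rewrite ?sum_if' // big1.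
  by rewrite sumrN sum_if'.
- rewrite exchange_big; apply: eq_bigr => i _; rewrite raddf_sum.
  by apply: eq_bigr => j _; rewrite sum_if'.
- transitivity (\sum_(j < n) \sum_(k < n) mulv (xi k) (Defs.deriv (xi j) g)).
    apply: eq_bigr => j _; rewrite exchange_big; apply: eq_bigr => k _.
    by rewrite sum_if'.
  by rewrite exchange_big; apply: eq_bigr => k _; rewrite raddf_sum.
- rewrite sum3_rot; apply: eq_bigr => i _; rewrite raddf_sum; apply: eq_bigr => k _.
  by rewrite /= !raddf_sum.
Qed.


Lemma D1_zm : zmod_morphism D1.
Proof. by move=> g h; rewrite /D1 -sumrB; apply: eq_bigr => j _; rewrite raddfB. Qed.
HB.instance Definition _ := GRing.isZmodMorphism.Build (elt n) (elt n) D1 D1_zm.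
Lemma D2_zm : zmod_morphism D2.
Proof. by move=> g h; rewrite /D2 -sumrB; apply: eq_bigr => j _; rewrite raddfB. Qed.
HB.instance Definition _ := GRing.isZmodMorphism.Build (elt n) (elt n) D2 D2_zm.
Lemma D3_zm : zmod_morphism D3.
Proof. by move=> g h; rewrite /D3 -sumrB; apply: eq_bigr => j _; rewrite !raddfB. Qed.
HB.instance Definition _ := GRing.isZmodMorphism.Build (elt n) (elt n) D3 D3_zm.
Lemma P_zm : zmod_morphism P.
Proof. by move=> g h; rewrite /P -sumrB; apply: eq_bigr => j _; rewrite raddfB. Qed.
HB.instance Definition _ := GRing.isZmodMorphism.Build (elt n) (elt n) P P_zm.
Lemma Q_zm : zmod_morphism Q.
Proof. by move=> g h; rewrite /Q -sumrB; apply: eq_bigr => j _; rewrite raddfB. Qed.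
HB.instance Definition _ := GRing.isZmodMorphism.Build (elt n) (elt n) Q Q_zm.
Lemma L_zm : zmod_morphism L.
Proof. by move=> g h; rewrite /L -sumrB; apply: eq_bigr => j _; rewrite !raddfB. Qed.
HB.instance Definition _ := GRing.isZmodMorphism.Build (elt n) (elt n) L L_zm.

Definition Lp g := L g *+ n + P (Q g).
Lemma Lp_zm : zmod_morphism Lp.
Proof.
move=> g h; rewrite /Lp !raddfB /= mulrnBl.
by rewrite opprD !addrA; congr (_ + _); rewrite -!addrA; congr (_ + _); rewrite addrC.
Qed.
HB.instance Definition _ := GRing.isZmodMorphism.Build (elt n) (elt n) Lp Lp_zm.

Lemma scE a g T : sc a g T = a * g T. Proof. by rewrite ffunE. Qed.

Lemma L_sc a g : L (sc a g) = sc a (L g).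
Proof. by rewrite /L raddf_sum; apply: eq_bigr => i _; rewrite !mulv_sc. Qed.
Lemma P_sc a g : P (sc a g) = sc a (P g).
Proof. by rewrite /P raddf_sum; apply: eq_bigr => i _; rewrite !mulv_sc. Qed.
Lemma Q_sc a g : Q (sc a g) = sc a (Q g).
Proof. by rewrite /Q raddf_sum; apply: eq_bigr => i _; rewrite !mulv_sc. Qed.
Lemma Lp_sc a g : Lp (sc a g) = sc a (Lp g).
Proof. by rewrite /Lp raddfD raddfMn /= L_sc Q_sc P_sc. Qed.

Lemma sc_add a b g : sc a g + sc b g = sc (a + b) g.
Proof. by apply/ffunP=> T; rewrite ffD !scE mulrDl. Qed.

Lemma sc_eq0 a g : a != 0 -> sc a g = 0 -> g = 0.
Proof.
move=> a0 /ffunP e; apply/ffunP=> T; move: (e T); rewrite scE ff0 => /eqP.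
by rewrite mulf_eq0 (negbTE a0) /= => /eqP ->.
Qed.

Definition cnt T : nat := \sum_(j < n) ((th j \in T) + (xi j \in T))%N.

Lemma mulv_deriv_same v g : mulv v (Defs.deriv v g) = [ffun T : {set var n} => (v \in T)%:R * g T].
Proof.
apply/ffunP=> T; rewrite mulvE [RHS]ffunE; case vT: (v \in T); last by rewrite mul0r.
rewrite derivE !inE eqxx /= setD1K // (sgD1 v vT) ltnn expr0 mul1r.
by rewrite mulrA sg_sq !mul1r.
Qed.

Lemma NopE g : Nop g = [ffun T : {set var n} => (cnt T)%:R * g T].
Proof.
apply/ffunP=> T; rewrite /Nop sum_ffunE ffunE /cnt natr_sum mulr_suml.
by apply: eq_bigr => j _; rewrite ffD !mulv_deriv_same !ffunE natrD mulrDl.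
Qed.

Definition hom k g := forall T, g T != 0 -> cnt T = k.

Lemma Nop_hom k g : hom k g -> Nop g = sc k%:R g.
Proof.
move=> hg; apply/ffunP=> T; rewrite NopE !ffunE.
by case: (eqVneq (g T) 0) => [->|/hg ->]; rewrite ?mulr0.
Qed.

Lemma cnt_th i T : th i \notin T -> cnt (th i |: T) = (cnt T).+1.
Proof.
move=> iT; rewrite /cnt (bigD1 i) //= [in RHS](bigD1 i) //= !inE eqxx xith /=.
rewrite (negbTE iT) (eq_bigr (fun j => ((th j \in T) + (xi j \in T))%N)).
  by rewrite add0n addSn.
by move=> j ji; rewrite !inE th_eq xith (negbTE ji).
Qed.

Lemma cnt_xi i T : xi i \notin T -> cnt (xi i |: T) = (cnt T).+1.
Proof.
move=> iT; rewrite /cnt (bigD1 i) //= [in RHS](bigD1 i) //= !inE eqxx thxi /=.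
rewrite (negbTE iT) (eq_bigr (fun j => ((th j \in T) + (xi j \in T))%N)).
  by rewrite addn0 addn1 addSn.
by move=> j ji; rewrite !inE xi_eq thxi (negbTE ji).
Qed.

Lemma hom0 k : hom k 0.
Proof. by move=> T; rewrite ff0 eqxx. Qed.

Lemma homD k g h : hom k g -> hom k h -> hom k (g + h).
Proof.
move=> hg hh T; rewrite ffD; case: (eqVneq (g T) 0) => [->|/hg //].
by rewrite add0r => /hh.
Qed.

Lemma homMn k g m : hom k g -> hom k (g *+ m).
Proof. by move=> hg; elim: m => [|m IH]; rewrite ?mulr0n ?mulrS; [apply: hom0 | apply: homD]. Qed.

Lemma hom_sum k (F : 'I_n -> elt n) : (forall i, hom k (F i)) -> hom k (\sum_(i < n) F i).
Proof. move=> hF; elim/big_ind: _ => //; [exact: hom0 | exact: homD]. Qed.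

Lemma hom_mth i k g : hom k g -> hom k.+1 (mulv (th i) g).
Proof.
move=> hg T; rewrite mulvE; case: ifP => iT; last by rewrite eqxx.
rewrite mulf_eq0 negb_or => /andP[_ /hg <-].
by rewrite -(@cnt_th i (T :\ th i)) ?setD11 // setD1K.
Qed.

Lemma hom_mxi i k g : hom k g -> hom k.+1 (mulv (xi i) g).
Proof.
move=> hg T; rewrite mulvE; case: ifP => iT; last by rewrite eqxx.
rewrite mulf_eq0 negb_or => /andP[_ /hg <-].
by rewrite -(@cnt_xi i (T :\ xi i)) ?setD11 // setD1K.
Qed.

Lemma hom_Lp k g : hom k g -> hom k.+2 (Lp g).
Proof.
move=> hg; apply: homD; first apply: homMn.
  by apply: hom_sum => i; apply: hom_mxi; apply: hom_mth.
by apply: hom_sum => i; apply: hom_mth; apply: hom_sum => j; apply: hom_mxi.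
Qed.

Lemma cnt_le T : (cnt T <= 2 * n)%N.
Proof.
apply: (@leq_trans (\sum_(j < n) 2)%N).
  by apply: leq_sum => j _; case: (th j \in T); case: (xi j \in T).
by rewrite sum_nat_const card_ord mulnC.
Qed.

Lemma hom_big m g : hom m g -> (2 * n < m)%N -> g = 0.
Proof.
move=> hg lt; apply/ffunP=> T; rewrite ff0; apply/eqP; apply: contraLR lt => /hg <-.
by rewrite -leqNgt cnt_le.
Qed.

Lemma D1_Lp g : D1 g = 0 -> D1 (Lp g) = 0.
Proof.
move=> h; rewrite /Lp raddfD raddfMn /= S1 S2 h !raddf0 sub0r.
by rewrite addr0 mulNrn addNr.
Qed.

Lemma D2_Lp g : D2 g = 0 -> D2 (Lp g) = 0.
Proof.
move=> h; rewrite /Lp raddfD raddfMn /= S3 S4 h !raddf0 add0r sub0r.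
by rewrite subrr.
Qed.

Lemma D3_Lp k g : D1 g = 0 -> D2 g = 0 -> hom k g ->
  D3 (Lp g) = Lp (D3 g) + sc (n%:R * (n%:R - 1 - k%:R)) g.
Proof.
move=> h1 h2 hk; rewrite /Lp raddfD raddfMn /= S5 S6 h1 h2 !raddf0 (Nop_hom hk).
apply/ffunP=> T; rewrite !ffE !scE; ring.
Qed.

Lemma no_high k f0 : (0 < n)%N -> f0 != 0 -> D1 f0 = 0 -> D2 f0 = 0 -> D3 f0 = 0 ->
  hom k f0 -> (k < n)%N.
Proof.
move=> n0 nz h1 h2 h3 hh; rewrite ltnNge; apply/negP => kn.
pose it (j : nat) := iter j Lp f0.
have W (j : nat) : [/\ D1 (it j) = 0, D2 (it j) = 0 & hom (k + 2 * j) (it j)].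
  elim: j => [|j [a b c]]; first by rewrite muln0 addn0.
  rewrite /it iterS -/(it j); split; [exact: D1_Lp | exact: D2_Lp |].
  by rewrite mulnS addnA addn2; apply: hom_Lp.
have E (j : nat) : D3 (it j.+1) = sc (n%:R * (j.+1)%:R * (n%:R - k%:R - (j.+1)%:R)) (it j).
  elim: j => [|j IH].
    rewrite /it /= (D3_Lp h1 h2 hh) h3 raddf0 add0r.
    by congr sc; ring.
  have [a b c] := W j.+1.
  rewrite /it iterS -/(it j.+1) (D3_Lp a b c) IH Lp_sc sc_add.
  rewrite /it iterS -/(it j); congr sc.
  rewrite !natrD !natrM /=; ring.
have nzj (j : nat) : it j != 0.
  elim: j => [|j IH] //; apply/eqP => e.
  have := E j; rewrite e raddf0 => /esym /sc_eq0 H.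
  move/eqP: IH; apply; apply: H.
  have kn' : (n%:R <= k%:R :> rat) by rewrite ler_nat.
  rewrite !mulf_neq0 // ?pnatr_eq0 -?lt0n //.
  have jp : (0 < (j.+1)%:R :> rat) by rewrite ltr0n.
  by apply: ltr0_neq0; lra.
have [_ _ c] := W n.+1.
have lt : (2 * n < k + 2 * n.+1)%N by lia.
by move: (nzj n.+1); rewrite (hom_big c lt) eqxx.
Qed.


Definition cm (p : pred nat) g : elt n := [ffun T => if p (cnt T) then g T else 0].
Lemma cm_zm p : zmod_morphism (cm p).
Proof. by move=> g h; apply/ffunP=> T; rewrite !ffunE; case: ifP; rewrite ?subr0. Qed.
HB.instance Definition _ p := GRing.isZmodMorphism.Build (elt n) (elt n) (cm p) (cm_zm p).

Lemma deriv_cm_th p i g :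
  Defs.deriv (th i) (cm p g) = cm (fun m => p m.+1) (Defs.deriv (th i) g).
Proof.
apply/ffunP=> T; rewrite !ffunE; case: ifP => iT; first by case: ifP.
by rewrite cnt_th ?iT //; case: ifP; rewrite ?mulr0.
Qed.

Lemma deriv_cm_xi p i g :
  Defs.deriv (xi i) (cm p g) = cm (fun m => p m.+1) (Defs.deriv (xi i) g).
Proof.
apply/ffunP=> T; rewrite !ffunE; case: ifP => iT; first by case: ifP.
by rewrite cnt_xi ?iT //; case: ifP; rewrite ?mulr0.
Qed.

Lemma D1_cm p g : D1 (cm p g) = cm (fun m => p m.+1) (D1 g).
Proof. by rewrite /D1 raddf_sum; apply: eq_bigr => i _; rewrite deriv_cm_th. Qed.
Lemma D2_cm p g : D2 (cm p g) = cm (fun m => p m.+1) (D2 g).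
Proof. by rewrite /D2 raddf_sum; apply: eq_bigr => i _; rewrite deriv_cm_xi. Qed.
Lemma D3_cm p g : D3 (cm p g) = cm (fun m => p m.+2) (D3 g).
Proof. by rewrite /D3 raddf_sum; apply: eq_bigr => i _; rewrite deriv_cm_xi deriv_cm_th. Qed.

Lemma upper f (S : {set var n}) : (0 < n)%N -> D1 f = 0 -> D2 f = 0 -> D3 f = 0 -> f S != 0 -> (cnt S < n)%N.
Proof.
move=> n0 h1 h2 h3 fS.
apply: (@no_high (cnt S) (cm (pred1 (cnt S)) f)) => //.
- apply/eqP => /ffunP /(_ S); rewrite ffunE /= eqxx ff0; exact/eqP.
- by rewrite D1_cm h1 raddf0.
- by rewrite D2_cm h2 raddf0.
- by rewrite D3_cm h3 raddf0.
- move=> T; rewrite ffunE /=; case: (cnt T =P cnt S) => // _; by rewrite eqxx.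
Qed.

Lemma card_cnt (S : {set var n}) : (forall u, u \in S -> (val u.1 < 2)%N) -> #|S| = cnt S.
Proof.
move=> hS.
rewrite -sum1_card big_mkcond /=.
transitivity (\sum_(a : 'I_3) \sum_(j : 'I_n) (if (a, j) \in S then 1 else 0))%N.
  by rewrite pair_big /=; apply: eq_bigr => [[a j]] _.
rewrite !big_ord_recl big_ord0 addn0 /cnt big_split /=.
have e0 : forall j, ((ord0 : 'I_3), j) = th j by move=> j; congr pair; apply: val_inj.
have e1 : forall j, ((lift ord0 (ord0 : 'I_2)), j) = xi j by move=> j; congr pair; apply: val_inj.
rewrite addnA [X in (_ + X)%N]big1 ?addn0; last first.
  by move=> j _; case: ifP => // /hS.
congr addn; apply: eq_bigr => j _; [rewrite e0 | rewrite e1]; by case: ifP.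
Qed.


Lemma small_zero f (S : {set var n}) : antisym_elt f -> (#|S|.+2 <= n)%N -> f S = 0.
Proof.
move=> hA hS.
pose I := [set u.2 | u in S].
have : (1 < #|~: I|)%N.
  have := cardsC I; rewrite card_ord.
  have := leq_imset_card (fun u : var n => u.2) S; rewrite -/I.
  move=> ha hb; rewrite -(leq_add2l #|I|) hb; apply: leq_trans hS; by rewrite addn2 !ltnS.
case/card_gt1P => a [b [aI bI ab]].
pose s := tperm a b.
have fix1 : forall u, u \in S -> permvar s u = u /\ permvar s^-1 u = u.
  move=> u uS; have uI : u.2 \in I by apply: imset_f.
  rewrite inE in aI; rewrite inE in bI.
  have au : a != u.2 by apply: contraNneq aI => ->.
  have bu : b != u.2 by apply: contraNneq bI => ->.
  by rewrite /permvar /s tpermV tpermD //; case: u {uS uI au bu}.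
have e1 : permvar s^-1 @: S = S.
  by rewrite (eq_in_imset (g := id)) ?imset_id // => u /fix1 [].
have e2 : inv_count s S = 0%N.
  apply/eqP; rewrite cards_eq0; apply/eqP/setP => p; rewrite !inE.
  apply/negP => /and4P [p1 p2 lt lt'].
  have [q1 _] := fix1 _ p1; have [q2 _] := fix1 _ p2.
  by move: lt'; rewrite q1 q2 ltnNge (ltnW lt).
have := hA s S; rewrite /act ffunE e1 e2 expr0 mul1r /s odd_tperm ab expr1 => e.
lra.
Qed.

End Work.

Unset Implicit Arguments.

Theorem corollary2p4 (n : nat) (hn : (0 < n)%N) :
  (forall f : elt n, (f != 0 :> elt n) -> inT f -> in_Qth f -> antisym_elt f ->
     degree f = n.-1) /\
  (forall f : elt n, (f != 0 :> elt n) -> inT f -> in_Qthxi f -> antisym_elt f ->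
     degree f = n.-1).
Proof.
have P2 : forall f : elt n, (f != 0 :> elt n) -> inT f -> in_Qthxi f -> antisym_elt f ->
     degree f = n.-1.
  move=> f nz hT hQ hA.
  have h1 : D1 f = 0 := hT 1%N 0%N 0%N isT.
  have h2 : D2 f = 0 := hT 0%N 1%N 0%N isT.
  have h3 : D3 f = 0 := hT 1%N 1%N 0%N isT.
  have up S : f S != 0 -> (#|S| < n)%N.
    by move=> fS; rewrite (card_cnt (hQ S fS)); exact: (upper hn h1 h2 h3 fS).
  have lo S : f S != 0 -> (n.-1 <= #|S|)%N.
    move=> fS; rewrite leqNgt; apply/negP => lt; move/eqP: fS; apply.
    by apply: small_zero => //; lia.
  have [S0 fS0] : exists S, f S != 0.
    apply/existsP; apply: contraR nz => /existsPn H; apply/eqP/ffunP => S.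
    by rewrite ff0; apply/eqP; move: (H S); rewrite negbK.
  rewrite /degree; apply/eqP; rewrite eqn_leq; apply/andP; split.
    by apply/bigmax_leqP => S fS; have := up S fS; lia.
  apply: leq_trans (lo S0 fS0) _; rewrite (bigD1 S0) //=; exact: leq_maxl.
split=> // f nz hT hQ hA; apply: P2 => // S fS u uS.
by rewrite (hQ S fS u uS).
Qed.
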